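(* For every $k\in\{1,\dots,J\}$ and every $r\in(0,1)$ with $r<r_0$, \[ -\sum_{j=1}^k u_j\alpha_j+\mu_k^{(r)}-\sum_{j=k}^J w_{jk}\,\mu_j^{(r)}\ \ge\ \frac1J(1-w_{kk})\,r^k, \] where $u=u^{(k)}=(w_{1k},\dots,w_{k-1,k},1,0,\dots,0)\in\mathbb{R}_+^J$ (the $k$th entry is $1$, entries after $k$ are $0$).
   Context: $P$ is a substochastic $J\times J$ routing matrix with $I-P$ invertible; $\alpha_j\ge0$; $\lambda=(\lambda_j)$ solves the traffic equations $\lambda_j=\alpha_j+\sum_{\ell=1}^J\lambda_\ell P_{\ell j}$; $\mu_j^{(r)}=\lambda_j+r^j$ for $j=1,\dots,J$. $(w_{jk})$ is the unique solution in $[0,1]^{J\times J}$ of $w_{jk}=P_{jk}+\sum_{\ell=1}^{k-1}P_{j\ell}w_{\ell k}$ (with $w_{kk}<1$), and $r_0=\min_{\{1\le k<j\le J: w_{jk}\ne0\}}((1-w_{kk})/(Jw_{jk}))^{1/(j-k)}$, taken as $1$ if the set is empty. *)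

(* Defs.v *)
From HB Require Import structures.
From mathcomp Require Import all_boot all_order all_algebra.
From mathcomp Require Import reals exp.
Set Implicit Arguments. Unset Strict Implicit. Unset Printing Implicit Defensive.
Import Order.TTheory GRing.Theory Num.Theory.
Local Open Scope ring_scope.

(* Indices 1..J of the paper are the ordinals 'I_J = {0..J-1}; paper index
   j corresponds to ordinal j with value j-1, so r^j becomes r ^+ j.+1. *)

Definition substochastic (R : realType) (J : nat) (P : 'M[R]_J) : Prop :=
  (forall i j, 0 <= P i j) /\ (forall i, \sum_(j < J) P i j <= 1).

Definition traffic_sol (R : realType) (J : nat) (P : 'M[R]_J)
  (alpha lam : 'I_J -> R) : Prop :=
  forall j, lam j = alpha j + \sum_(l < J) lam l * P l j.

Definition mu (R : realType) (J : nat) (lam : 'I_J -> R) (r : R) (j : 'I_J) : R :=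
  lam j + r ^+ j.+1.

Definition w_sol (R : realType) (J : nat) (P w : 'M[R]_J) : Prop :=
  (forall j k, w j k = P j k + \sum_(l < J | (l < k)%N) P j l * w l k) /\
  (forall j k, 0 <= w j k <= 1) /\
  (forall k, w k k < 1).

Definition r0_cands (R : realType) (J : nat) (w : 'M[R]_J) : seq R :=
  [seq powR ((1 - w k k) / (J%:R * w j k)) (((j - k)%N)%:R^-1)
  | k <- enum 'I_J, j <- [seq j : 'I_J <- enum 'I_J | (k < j)%N && (w j k != 0)]].

Definition r0 (R : realType) (J : nat) (w : 'M[R]_J) : R :=
  match r0_cands w with
  | [::] => 1
  | x :: s => foldr Num.min x s
  end.

Definition u_vec (R : realType) (J : nat) (w : 'M[R]_J) (k j : 'I_J) : R :=
  if (j < k)%N then w j k else if j == k then 1 else 0.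

(* Main.v *)
Require Import Defs.
From HB Require Import structures.
From mathcomp Require Import all_boot all_order all_algebra.
From mathcomp Require Import reals exp.
From mathcomp Require Import ring lra.
Import Order.TTheory GRing.Theory Num.Theory.
Local Open Scope ring_scope.

Lemma foldr_min_le (R : realType) (x : R) s y :
  y \in x :: s -> foldr Num.min x s <= y.
Proof.
elim: s y => [|a s IH] y /=; first by rewrite inE => /eqP ->.
rewrite !inE => /orP [/eqP->|/orP[/eqP->|H]].
- by rewrite ge_min; apply/orP; right; apply: IH; rewrite inE eqxx.
- by rewrite ge_min lexx.
- by rewrite ge_min; apply/orP; right; apply: IH; rewrite inE H orbT.
Qed.

Lemma r0_le (R : realType) J (w : 'M[R]_J) y : y \in r0_cands w -> r0 w <= y.
Proof. rewrite /r0; case: (r0_cands w) => // x s H; exact: foldr_min_le. Qed.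

Lemma sum_u (R : realType) J (w : 'M[R]_J) (k : 'I_J) (f : 'I_J -> R) :
  \sum_(j : 'I_J) u_vec w k j * f j = f k + \sum_(j : 'I_J | (j < k)%N) w j k * f j.
Proof.
rewrite (bigID (fun j : 'I_J => (j < k)%N)) /= addrC; congr (_ + _); last first.
  by apply: eq_bigr => j Hj; rewrite /u_vec Hj.
rewrite (bigD1 k) /=; last by rewrite ltnn.
rewrite /u_vec ltnn eqxx mul1r big1 ?addr0 // => j /andP[H1 H2].
by rewrite (negbTE H1) (negbTE H2) mul0r.
Qed.

Lemma alg_part (R : realType) (J : nat) (P w : 'M[R]_J)
  (alpha lam : 'I_J -> R) (hlam : traffic_sol P alpha lam) (hw : w_sol P w) (k : 'I_J) :
  - (\sum_(j < J | (j <= k)%N) u_vec w k j * alpha j) + lam k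
    - \sum_(j < J | (k <= j)%N) w j k * lam j = 0.
Proof.
have E1 : \sum_(j < J | (j <= k)%N) u_vec w k j * alpha j = \sum_(j : 'I_J) u_vec w k j * alpha j.
  rewrite [RHS](bigID (fun j : 'I_J => (j <= k)%N)) /= [X in _ = _ + X]big1 ?addr0 // => j.
  rewrite -ltnNge /u_vec => H; rewrite ltnNge (ltnW H) /=.
  have -> : (j == k) = false by apply/eqP => E; move: H; rewrite E ltnn.
  by rewrite mul0r.
have E2 : \sum_(j : 'I_J) u_vec w k j * alpha j =
   \sum_(j : 'I_J) u_vec w k j * lam j - \sum_(l : 'I_J) lam l * w l k.
  have -> : \sum_(j : 'I_J) u_vec w k j * alpha j =
     \sum_j (u_vec w k j * lam j - \sum_l lam l * (P l j * u_vec w k j)).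
    apply: eq_bigr => j _; rewrite [lam j]hlam mulrDr mulr_sumr.
    have -> : \sum_(i < J) u_vec w k j * (lam i * P i j) =
              \sum_(l < J) lam l * (P l j * u_vec w k j).
      by apply: eq_bigr => l _; ring.
    by rewrite addrK.
  rewrite sumrB; congr (_ - _); rewrite exchange_big /=; apply: eq_bigr => l _.
  rewrite -mulr_sumr; congr (_ * _).
  transitivity (\sum_(j : 'I_J) u_vec w k j * P l j).
    by apply: eq_bigr => j _; rewrite mulrC.
  rewrite sum_u (proj1 hw l k); congr (_ + _).
  by apply: eq_bigr => j _; rewrite mulrC.
have E3 : \sum_(l : 'I_J) lam l * w l k = \sum_(l : 'I_J | (l < k)%N) w l k * lam l
     + \sum_(l : 'I_J | (k <= l)%N) w l k * lam l.
  rewrite (bigID (fun j : 'I_J => (j < k)%N)) /=; congr (_ + _);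
    [apply: eq_bigr => j _; exact: mulrC|]; apply: eq_big => [j|j _]; [by rewrite -leqNgt | exact: mulrC].
rewrite E1 E2 sum_u E3; ring.
Qed.

Lemma term_bound (R : realType) (J : nat) (P w : 'M[R]_J) (hw : w_sol P w)
  (k j : 'I_J) (r : R) (hr0 : 0 < r) (hrr0 : r < r0 w) (hkj : (k < j)%N) :
  w j k * r ^+ j.+1 <= J%:R^-1 * (1 - w k k) * r ^+ k.+1.
Proof.
have wkk : 0 < 1 - w k k by rewrite subr_gt0; exact: (proj2 (proj2 hw)).
have Jpos : 0 < J%:R :> R by rewrite ltr0n; apply: leq_ltn_trans (ltn_ord k).
have wge : 0 <= w j k by case/andP: (proj1 (proj2 hw) j k).
have rhs0 : 0 <= J%:R^-1 * (1 - w k k) * r ^+ k.+1.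
  by rewrite !mulr_ge0 ?invr_ge0 ?ltW ?exprn_gt0.
case: (eqVneq (w j k) 0) => [->|nz]; first by rewrite mul0r.
have wpos : 0 < w j k by rewrite lt_def nz wge.
set x := (1 - w k k) / (J%:R * w j k).
have xpos : 0 < x by rewrite divr_gt0 // mulr_gt0.
set n := (j - k)%N.
have npos : (0 < n)%N by rewrite subn_gt0.
have mem : powR x (n%:R^-1) \in r0_cands w.
  apply/allpairsPdep; exists k, j; split => //; first by rewrite mem_enum.
  by rewrite mem_filter hkj nz mem_enum.
have rc : r < powR x (n%:R^-1) by apply: lt_le_trans hrr0 (@r0_le _ _ _ _ mem).
have cn : (powR x (n%:R^-1)) ^+ n = x.
  rewrite -powR_mulrn ?powR_ge0 // -powRrM mulVf ?powRr1 ?ltW //.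
  by rewrite pnatr_eq0 -lt0n.
have rn : r ^+ n < x.
  by rewrite -cn ltrXn2r ?ltW // -lt0n.
have -> : r ^+ j.+1 = r ^+ n * r ^+ k.+1.
  by rewrite -exprD addnS subnK // ltnW.
apply: (@le_trans _ _ (w j k * x * r ^+ k.+1)).
  rewrite mulrA; apply: ler_wpM2r; first exact: exprn_ge0 (ltW hr0).
  by apply: ler_wpM2l => //; exact: ltW.
rewrite le_eqVlt; apply/orP; left; apply/eqP; rewrite /x.
by field; rewrite ?gt_eqF.
Qed.

Theorem mainTheorem8 (R : realType) (J : nat) (P w : 'M[R]_J)
  (alpha lam : 'I_J -> R)
  (hP : substochastic P) (hinv : (1%:M - P) \in unitmx)
  (halpha : forall j, 0 <= alpha j)
  (hlam : traffic_sol P alpha lam)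
  (hw : w_sol P w)
  (k : 'I_J) (r : R) (hr0 : 0 < r) (hr1 : r < 1) (hrr0 : r < r0 w) :
  - (\sum_(j < J | (j <= k)%N) u_vec w k j * alpha j) + mu lam r k
    - \sum_(j < J | (k <= j)%N) w j k * mu lam r j
  >= J%:R^-1 * (1 - w k k) * r ^+ k.+1.
Proof.
have A := @alg_part _ _ _ _ _ _ hlam hw k.
set c := J%:R^-1 * (1 - w k k) * r ^+ k.+1.
have wkk : 0 < 1 - w k k by rewrite subr_gt0; exact: (proj2 (proj2 hw)).
have Jpos : 0 < J%:R :> R by rewrite ltr0n; apply: leq_ltn_trans (ltn_ord k).
have c0 : 0 <= c by rewrite !mulr_ge0 ?invr_ge0 ?ltW ?exprn_gt0.
have Jc : \sum_(j < J) c = (1 - w k k) * r ^+ k.+1.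
  rewrite sumr_const card_ord -mulr_natl /c !mulrA mulfV ?mul1r //.
  by rewrite gt_eqF.
have Smu : \sum_(j < J | (k <= j)%N) w j k * mu lam r j =
   \sum_(j < J | (k <= j)%N) w j k * lam j +
   \sum_(j < J | (k <= j)%N) w j k * r ^+ j.+1.
  by rewrite -big_split /=; apply: eq_bigr => j _; rewrite /mu mulrDr.
have S1 : \sum_(j < J | (k <= j)%N) w j k * r ^+ j.+1 =
   w k k * r ^+ k.+1 + \sum_(j < J | (k < j)%N) w j k * r ^+ j.+1.
  rewrite (bigD1 k) ?leqnn //=; congr (_ + _).
  apply: eq_bigl => j; rewrite ltn_neqAle andbC eq_sym; congr (_ && _).
have T : \sum_(j < J | (k < j)%N) w j k * r ^+ j.+1 <= \sum_(j < J) c - c.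
  rewrite [X in _ <= X - _](bigD1 k) //= addrC addrK.
  rewrite big_mkcond /= [X in _ <= X]big_mkcond /=.
  apply: ler_sum => j _.
  case: ifP => H.
    rewrite (_ : j != k) /=; first exact: (@term_bound _ _ _ _ hw).
    by apply/eqP => E; move: H; rewrite E ltnn.
  by case: ifP.
rewrite Smu S1 /mu.
rewrite Jc in T.
have E : - (\sum_(j < J | (j <= k)%N) u_vec w k j * alpha j) + (lam k + r ^+ k.+1) -
  (\sum_(j < J | (k <= j)%N) w j k * lam j + (w k k * r ^+ k.+1 +
   \sum_(j < J | (k < j)%N) w j k * r ^+ j.+1)) =
  (- (\sum_(j < J | (j <= k)%N) u_vec w k j * alpha j) + lam k
    - \sum_(j < J | (k <= j)%N) w j k * lam j) + (1 - w k k) * r ^+ k.+1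
    - \sum_(j < J | (k < j)%N) w j k * r ^+ j.+1 by ring.
rewrite E A add0r; lra.
Qed.
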